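(* Let $\Psi\in\mathcal{K}_{\mathrm{FxT}}$ and $\sigma(s)=\sum_{i=1}^nc_is^{r_i}$ with $1\le r_1<r_2<\dots<r_n$ and real $c_i\neq0$, and suppose $\sigma'(s)>0$ for all $s>0$. Then there exists $\tilde\Psi\in\mathcal{K}_{\mathrm{FxT}}$ such that $\tilde\Psi(\sigma(s))\le\Psi(s)\sigma'(s)$ for all $s>0$.
   Context: $\mathcal{K}_{\mathrm{FxT}}$ denotes the set of functions $\alpha:\mathbb{R}_{\ge0}\to\mathbb{R}_{\ge0}$ of the form $\alpha(s)=c_1s^{p_1}+c_2s^{p_2}$ with $c_1,c_2>0$, $p_1\in(0,1)$ and $p_2>1$. *)

(* Defs.v *)
From mathcomp Require Import all_boot all_order all_algebra.
From mathcomp Require Import all_classical all_reals all_analysis.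
Set Implicit Arguments. Unset Strict Implicit. Unset Printing Implicit Defensive.
Import Order.TTheory GRing.Theory Num.Theory.
Local Open Scope ring_scope.

Definition K_FxT (R : realType) (alpha : R -> R) : Prop :=
  exists c1 c2 p1 p2 : R,
    [/\ 0 < c1, 0 < c2, 0 < p1 < 1, 1 < p2 &
        forall s : R, 0 <= s -> alpha s = c1 * s `^ p1 + c2 * s `^ p2].

Definition sigma_fun (R : realType) (n : nat) (c r : 'I_n -> R) (s : R) : R :=
  \sum_(i < n) c i * s `^ r i.

(* Main.v *)
Require Import Defs.
From mathcomp Require Import all_boot all_order all_algebra.
From mathcomp Require Import all_classical all_reals all_analysis.
From mathcomp Require Import ring lra.
Import Order.TTheory GRing.Theory Num.Theory.
Local Open Scope ring_scope.

Lemma gpoly_der (R : realType) n (w d : 'I_n -> R) (t : R) : 0 < t ->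
  is_derive t 1 (fun x => \sum_(i < n) w i * x `^ d i)
     (\sum_(i < n) w i * (d i * t `^ (d i - 1))).
Proof.
move=> t0.
have -> : (fun x => \sum_(i < n) w i * x `^ d i) = \sum_(i < n) (fun x => w i * x `^ d i).
  by apply/funext => x; rewrite fct_sumE.
apply: is_derive_sum => i.
apply: is_deriveZ.
exact: is_derive1_powR.
Qed.

Lemma lowb (R : realType) n (w d : 'I_n -> R) (i0 : 'I_n) :
  d i0 = 0 -> (forall i, i != i0 -> 0 < d i) -> w i0 != 0 ->
  (forall t, 0 < t <= 1 -> 0 < \sum_(i < n) w i * t `^ d i) ->
  exists2 k, 0 < k & forall t, 0 < t <= 1 -> k <= \sum_(i < n) w i * t `^ d i.
Proof.
move=> d0 dpos w0 fpos.
set f := fun t => \sum_(i < n) w i * t `^ d i.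
set dm := \big[Order.min/1]_(i | i != i0) d i.
have dm0 : 0 < dm by apply/bigmin_gtP; split => //; exact: dpos.
have dmle : forall i, i != i0 -> dm <= d i.
  by move=> i ii; rewrite /dm (bigminD1 i) // ge_min lexx.
set W := \sum_(i | i != i0) `|w i|.
have W0 : 0 <= W by apply: sumr_ge0 => i _; exact: normr_ge0.
set e := Order.min 1 (`|w i0| / (2 * (W + 1))).
have e0 : 0 < e.
  rewrite lt_min ltr01 /=; apply: divr_gt0; first by rewrite normr_gt0.
  lra.
have e1 : e <= 1 by rewrite ge_min lexx.
have We : W * e <= `|w i0| / 2.
  apply: (@le_trans _ _ ((W + 1) * e)); first by rewrite ler_wpM2r ?ltW //; lra.
  apply: (@le_trans _ _ ((W + 1) * (`|w i0| / (2 * (W + 1))))).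
    by rewrite ler_wpM2l ?ge_min ?lexx ?orbT //; lra.
  rewrite le_eqVlt; apply/orP; left; apply/eqP; field; lra.
set del := e `^ dm^-1.
have del0 : 0 < del by apply: powR_gt0.
have del1 : del <= 1.
  rewrite /del -(powRr0 e); apply: ger_powR; first by rewrite e0 e1.
  by rewrite invr_ge0 ltW.
have deldm : del `^ dm = e by rewrite /del -powRrM mulVf ?gt_eqF // powRr1 // ltW.
have key : forall t, 0 < t <= del -> `|f t - w i0| <= `|w i0| / 2.
  move=> t /andP[t0 tdel].
  rewrite /f (bigD1 i0) //= d0 powRr0 mulr1 addrC addrK.
  apply: le_trans (ler_norm_sum _ _ _) _.
  apply: le_trans We.
  rewrite /W mulr_suml; apply: ler_sum => i ii0.
  rewrite normrM (ger0_norm (powR_ge0 _ _)); apply: ler_wpM2l => //.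
  apply: (@le_trans _ _ (t `^ dm)).
    apply: ger_powR; first by rewrite t0 (le_trans tdel del1).
    exact: dmle.
  rewrite -deldm; apply: ge0_ler_powR => //; rewrite ?nnegrE ltW //.
have w0p : 0 < w i0.
  rewrite lt_neqAle eq_sym w0 /= leNgt; apply/negP => wn.
  have := key del; rewrite del0 lexx => /(_ isT).
  have := fpos del; rewrite del0 del1 => /(_ isT).
  rewrite /f ler_norml ltr0_norm //.
  move=> h /andP[h1 h2]; lra.
have near0 : forall t, 0 < t <= del -> w i0 / 2 <= f t.
  move=> t ht; have := key t ht; rewrite ler_norml gtr0_norm //.
  move=> /andP[h1 h2]; lra.
have fd : {in `[del, 1], forall x, derivable f x 1}.
  move=> x; rewrite in_itv /= => /andP[x0 _].
  by case: (@gpoly_der _ _ w d x (lt_le_trans del0 x0)).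
have [c cin cmin] := EVT_min del1 (derivable_within_continuous fd).
move: (cin); rewrite in_itv /= => /andP[c0 c1].
have fc : 0 < f c by apply: fpos; rewrite c1 (lt_le_trans del0 c0).
exists (Order.min (w i0 / 2) (f c)).
  by rewrite lt_min fc andbT divr_gt0.
move=> t /andP[t0 t1].
case: (leP t del) => tdel.
  by rewrite ge_min near0 ?t0.
by rewrite ge_min cmin ?orbT // in_itv /= t1 (ltW tdel).
Qed.

Lemma powb (R : realType) (x A s rr q : R) : 0 <= x -> 0 <= A -> 0 < s -> 0 <= q ->
  x <= A * s `^ rr -> x `^ q <= A `^ q * s `^ (rr * q).
Proof.
move=> x0 A0 s0 q0 xle.
have h0 : 0 <= A * s `^ rr by rewrite mulr_ge0 // powR_ge0.
apply: le_trans (ge0_ler_powR q0 _ _ xle) _; rewrite ?nnegrE //.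
by rewrite powRM ?powR_ge0 // powRrM.
Qed.
Arguments powb {R x A s rr q}.

Lemma finarith (R : realType) (X1 X2 M S m k RHS : R) :
  0 <= M -> 0 <= S -> 0 < m -> 0 < k -> X1 <= M * S -> X2 <= M * S ->
  m * k * S <= RHS -> (m * k / (2 * M + 1)) * X1 + (m * k / (2 * M + 1)) * X2 <= RHS.
Proof.
move=> M0 S0 m0 k0 h1 h2 h3.
set b := m * k / (2 * M + 1).
have b0 : 0 <= b by rewrite /b divr_ge0 // ?mulr_ge0 ?ltW //; lra.
have hb : b * (2 * M) <= m * k.
  rewrite /b mulrAC ler_pdivrMr; last by lra.
  rewrite ler_wpM2l ?mulr_ge0 ?ltW //; lra.
have e1 : b * X1 <= b * (M * S) by rewrite ler_wpM2l.
have e2 : b * X2 <= b * (M * S) by rewrite ler_wpM2l.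
have e3 : b * (2 * M) * S <= m * k * S by rewrite ler_wpM2r.
have e4 : b * (M * S) = b * (2 * M) * S / 2 by field.
nra.
Qed.

Lemma ident (R : realType) n (c r : 'I_n -> R) (t a : R) : 0 < t ->
  \sum_(i < n) c i * (r i * t `^ (r i - 1)) =
  t `^ (a - 1) * \sum_(i < n) (c i * r i) * t `^ (r i - a).
Proof.
move=> t0; rewrite mulr_sumr; apply: eq_bigr => i _.
have -> : t `^ (r i - 1) = t `^ (a - 1) * t `^ (r i - a).
  have -> : r i - 1 = (a - 1) + (r i - a) by ring.
  by rewrite powRD // (gt_eqF t0) implybT.
ring.
Qed.

Lemma powR_invN (R : realType) (t x : R) : 0 < t -> (t^-1) `^ (- x) = t `^ x.
Proof.
by move=> t0; rewrite -powR_inv1 ?ltW // -powRrM mulN1r opprK.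
Qed.

Theorem lemma5 (R : realType) (Psi : R -> R) (n : nat) (c r : 'I_n -> R) :
  K_FxT Psi ->
  (forall i : 'I_n, 1 <= r i) ->
  (forall i j : 'I_n, (i < j)%N -> r i < r j) ->
  (forall i : 'I_n, c i != 0) ->
  (forall s : R, 0 < s -> 0 < derive1 (sigma_fun c r) s) ->
  exists Psit : R -> R, K_FxT Psit /\
    (forall s : R, 0 < s ->
       Psit (sigma_fun c r s) <= Psi s * derive1 (sigma_fun c r) s).
Proof.
case=> a1 [a2 [p1 [p2 [a10 a20 /andP[p10 p11] p21 hPsi]]]] r1 rinc cnz hder.
have Hd : forall s, 0 < s ->
    derive1 (sigma_fun c r) s = \sum_(i < n) c i * (r i * s `^ (r i - 1)).
  move=> s s0; rewrite derive1E.
  exact: (@derive_val _ _ _ _ _ _ _ (@gpoly_der _ _ c r s s0)).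
have upos : forall s, 0 < s -> 0 < \sum_(i < n) c i * (r i * s `^ (r i - 1)).
  by move=> s s0; rewrite -Hd // hder.
destruct n as [|n'].
  by have := upos 1 ltr01; rewrite big_ord0 ltxx.
set i0 := (ord0 : 'I_n'.+1).
set iN := (ord_max : 'I_n'.+1).
have r0le : forall i, r i0 <= r i.
  move=> i; have [h|ip] := posnP i.
    by have -> : i = i0 by apply/val_inj.
  exact: ltW (rinc i0 i ip).
have rNge : forall i, r i <= r iN.
  move=> i; have := ltn_ord i; rewrite ltnS leq_eqVlt => /orP[/eqP h|h].
    by have -> : i = iN by apply/val_inj.
  exact: ltW (rinc i iN h).
have rpos : forall i, 0 < r i by move=> i; apply: lt_le_trans (r1 i); exact: ltr01.
have w0 : forall i, c i * r i != 0 by move=> i; rewrite mulf_neq0 // gt_eqF.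
have [k1 k10 hk1] : exists2 k, 0 < k & forall t, 0 < t <= 1 ->
    k <= \sum_(i < n'.+1) (c i * r i) * t `^ (r i - r i0).
  apply: lowb; first exact: subrr.
  - move=> i ii0; rewrite subr_gt0; apply: rinc.
    by rewrite lt0n; move: ii0; apply: contra => /eqP h; apply/eqP/val_inj.
  - exact: w0.
  - move=> t /andP[t0 _]; have := upos t t0; rewrite (@ident _ _ c r t (r i0) t0).
    by rewrite pmulr_rgt0 // powR_gt0.
have [k2 k20 hk2] : exists2 k, 0 < k & forall t, 0 < t <= 1 ->
    k <= \sum_(i < n'.+1) (c i * r i) * t `^ (r iN - r i).
  apply: lowb; first exact: subrr.
  - move=> i iiN; rewrite subr_gt0; apply: rinc.
    have := ltn_ord i; rewrite ltnS leq_eqVlt => /orP[/eqP h|//].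
    exfalso; move/eqP: iiN; apply; exact: val_inj.
  - exact: w0.
  - move=> t /andP[t0 _]; have ti0 : 0 < t^-1 by rewrite invr_gt0.
    have := upos _ ti0; rewrite (@ident _ _ c r _ (r iN) ti0).
    rewrite pmulr_rgt0 ?powR_gt0 //.
    congr (0 < _); apply: eq_bigr => i _; congr (_ * _).
    by rewrite -opprB powR_invN.
have L1 : forall s, 0 < s <= 1 ->
    k1 * s `^ (r i0 - 1) <= \sum_(i < n'.+1) c i * (r i * s `^ (r i - 1)).
  move=> s /andP[s0 s1]; rewrite (@ident _ _ c r s (r i0) s0) mulrC.
  by rewrite ler_wpM2l ?powR_ge0 // hk1 // s0 s1.
have L2 : forall s, 1 <= s ->
    k2 * s `^ (r iN - 1) <= \sum_(i < n'.+1) c i * (r i * s `^ (r i - 1)).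
  move=> s s1; have s0 : 0 < s by apply: lt_le_trans s1; exact: ltr01.
  rewrite (@ident _ _ c r s (r iN) s0) mulrC.
  rewrite ler_wpM2l ?powR_ge0 //.
  have := hk2 (s^-1); rewrite invr_gt0 s0 invf_le1 // s1 => /(_ isT) h.
  apply: le_trans h _; rewrite le_eqVlt; apply/orP; left; apply/eqP.
  apply: eq_bigr => i _; congr (_ * _).
  by rewrite -(@powR_invN _ s _ s0) opprB.
set A := \sum_(i < n'.+1) `|c i|.
have A0 : 0 <= A by apply: sumr_ge0 => i _; exact: normr_ge0.
have U1 : forall s, 0 < s <= 1 -> sigma_fun c r s <= A * s `^ (r i0).
  move=> s /andP[s0 s1]; rewrite /sigma_fun /A mulr_suml; apply: ler_sum => i _.
  apply: (@le_trans _ _ (`|c i| * s `^ r i)).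
    by rewrite ler_wpM2r ?powR_ge0 // ler_norm.
  rewrite ler_wpM2l //; apply: ger_powR; [by rewrite s0 s1 | exact: r0le].
have U2 : forall s, 1 <= s -> sigma_fun c r s <= A * s `^ (r iN).
  move=> s s1; rewrite /sigma_fun /A mulr_suml; apply: ler_sum => i _.
  apply: (@le_trans _ _ (`|c i| * s `^ r i)).
    by rewrite ler_wpM2r ?powR_ge0 // ler_norm.
  rewrite ler_wpM2l //; apply: ler_powR => //; exact: rNge.
set q1 := (p1 + r i0 - 1) / r i0.
set q2 := (p2 + r iN - 1) / r iN.
have r01 := r1 i0. have rN1 := r1 iN.
have r00 := rpos i0. have rN0 := rpos iN.
have q10 : 0 < q1 by rewrite /q1 divr_gt0 //; lra.
have q11 : q1 < 1 by rewrite /q1 ltr_pdivrMr // mul1r; lra.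
have q21 : 1 < q2 by rewrite /q2 ltr_pdivlMr // mul1r; lra.
have q20 : 0 < q2 by lra.
have rq1 : r i0 * q1 = p1 + r i0 - 1 by rewrite /q1 mulrC divfK // gt_eqF.
have rq2 : r iN * q2 = p2 + r iN - 1 by rewrite /q2 mulrC divfK // gt_eqF.
set M := A `^ q1 + A `^ q2.
have M0 : 0 <= M by rewrite addr_ge0 ?powR_ge0.
have AM1 : A `^ q1 <= M by rewrite lerDl powR_ge0.
have AM2 : A `^ q2 <= M by rewrite lerDr powR_ge0.
set m := Order.min a1 a2.
set k := Order.min k1 k2.
have m0 : 0 < m by rewrite lt_min a10 a20.
have k0 : 0 < k by rewrite lt_min k10 k20.
set b := m * k / (2 * M + 1).
have b0 : 0 < b by rewrite /b divr_gt0 ?mulr_gt0 //; lra.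
exists (fun x => if 0 <= x then b * x `^ q1 + b * x `^ q2 else 0); split.
  exists b, b, q1, q2; split => //; first by rewrite q10 q11.
  by move=> s ->.
move=> s s0; rewrite Hd //.
have Psis : Psi s = a1 * s `^ p1 + a2 * s `^ p2 by apply: hPsi; exact: ltW.
have Ps1 : m * s `^ p1 <= Psi s.
  rewrite Psis; apply: (@le_trans _ _ (a1 * s `^ p1)).
    by rewrite ler_wpM2r ?powR_ge0 // ge_min lexx.
  by rewrite lerDl mulr_ge0 ?powR_ge0 // ltW.
have Ps2 : m * s `^ p2 <= Psi s.
  rewrite Psis; apply: (@le_trans _ _ (a2 * s `^ p2)).
    by rewrite ler_wpM2r ?powR_ge0 // ge_min lexx orbT.
  by rewrite lerDr mulr_ge0 ?powR_ge0 // ltW.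
case: ifP => hx; last first.
  apply: mulr_ge0; last exact: ltW (upos s s0).
  apply: le_trans Ps1; apply: mulr_ge0; [exact: ltW | exact: powR_ge0].
rewrite /b; case: (leP s 1) => s1.
  apply: (@finarith _ _ _ M (s `^ (p1 + r i0 - 1))) => //; rewrite ?powR_ge0 //.
  - apply: le_trans (powb hx A0 s0 (ltW q10) (U1 s _)) _; first by rewrite s0 s1.
    by rewrite rq1 ler_wpM2r ?powR_ge0.
  - apply: le_trans (powb hx A0 s0 (ltW q20) (U1 s _)) _; first by rewrite s0 s1.
    apply: ler_pM; rewrite ?powR_ge0 //.
    apply: ger_powR; first by rewrite s0 s1.
    rewrite -rq1; apply: ler_wpM2l; lra.
  - have -> : p1 + r i0 - 1 = p1 + (r i0 - 1) by ring.
    rewrite powRD ?(gt_eqF s0) ?implybT //.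
    have -> : m * k * (s `^ p1 * s `^ (r i0 - 1)) =
              (m * s `^ p1) * (k * s `^ (r i0 - 1)) by ring.
    apply: ler_pM; rewrite ?mulr_ge0 ?powR_ge0 ?(ltW m0) ?(ltW k0) //.
    apply: le_trans (L1 s _); last by rewrite s0 s1.
    by rewrite ler_wpM2r ?powR_ge0 // ge_min lexx.
have s1' : 1 <= s by exact: ltW.
apply: (@finarith _ _ _ M (s `^ (p2 + r iN - 1))) => //; rewrite ?powR_ge0 //.
- apply: le_trans (powb hx A0 s0 (ltW q10) (U2 s s1')) _.
  apply: ler_pM; rewrite ?powR_ge0 //.
  apply: ler_powR => //.
  rewrite -rq2; apply: ler_wpM2l; lra.
- apply: le_trans (powb hx A0 s0 (ltW q20) (U2 s s1')) _.
  by rewrite rq2 ler_wpM2r ?powR_ge0.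
- have -> : p2 + r iN - 1 = p2 + (r iN - 1) by ring.
  rewrite powRD ?(gt_eqF s0) ?implybT //.
  have -> : m * k * (s `^ p2 * s `^ (r iN - 1)) =
            (m * s `^ p2) * (k * s `^ (r iN - 1)) by ring.
  apply: ler_pM; rewrite ?mulr_ge0 ?powR_ge0 ?(ltW m0) ?(ltW k0) //.
  apply: le_trans (L2 s s1').
  by rewrite ler_wpM2r ?powR_ge0 // ge_min lexx orbT.
Qed.
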